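(* Let $X,W\in L^1$ and suppose $W$ has a continuous distribution. Then $u_\lambda^c(X;W)=0$ for every $\lambda\in(0,1]$ if and only if $\mathsf{E}(X\mid W)=0$ almost surely.
   Context: Let $(\Omega,\mathcal{F},\mathsf{P})$ be a probability space, $L^1=L^1(\mathsf{P})$, and $\mathcal{P}$ the set of probability measures on $\mathcal{F}$ absolutely continuous with respect to $\mathsf{P}$. For $\mathsf{Q}\in\mathcal{P}$, $\mathsf{E}_\mathsf{Q}X:=\mathsf{E}_\mathsf{Q}X^+-\mathsf{E}_\mathsf{Q}X^-$ with the convention $\infty-\infty=-\infty$. For $\lambda\in(0,1]$, let $\mathcal{D}_\lambda=\{\mathsf{Q}\in\mathcal{P}:d\mathsf{Q}/d\mathsf{P}\le\lambda^{-1}\}$ and $u_\lambda(X)=\inf_{\mathsf{Q}\in\mathcal{D}_\lambda}\mathsf{E}_\mathsf{Q}X$ (minus Tail V@R of order $\lambda$). The set of extreme measures of $W$ is $\mathcal{X}_{\mathcal{D}_\lambda}(W)=\{\mathsf{Q}\in\mathcal{D}_\lambda:\mathsf{E}_\mathsf{Q}W=u_\lambda(W)\in(-\infty,\infty)\}$, and the utility contribution is $u_\lambda^c(X;W)=\inf_{\mathsf{Q}\in\mathcal{X}_{\mathcal{D}_\lambda}(W)}\mathsf{E}_\mathsf{Q}X$. *)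

(* Defs.v *)
From HB Require Import structures.
From mathcomp Require Import all_boot all_order all_algebra.
From mathcomp Require Import all_classical all_reals all_analysis.
Set Implicit Arguments. Unset Strict Implicit. Unset Printing Implicit Defensive.
Import Order.TTheory GRing.Theory Num.Theory.
Local Open Scope classical_set_scope.
Local Open Scope ring_scope.

Section Defs.
Context (d : measure_display) (T : measurableType d) (R : realType)
  (P : probability T R).

(* A probability measure Q << P is represented by its density f = dQ/dP.
   D_lambda = { Q in P : dQ/dP <= 1/lambda }. *)
Definition density_set (lam : R) : set (T -> R) :=
  [set f : T -> R | [/\ measurable_fun setT f,
               (forall x, 0 <= f x),
               (forall x, f x <= lam^-1) &
               (\int[P]_x (f x)%:E = 1)%E]].

Definition EQ (f : T -> R) (X : T -> R) : \bar R :=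
  (\int[P]_x (X x * f x)%:E)%E.

(* u_lambda(X) = inf_{Q in D_lambda} E_Q X  (minus Tail V@R) *)
Definition u_lam (lam : R) (X : T -> R) : \bar R :=
  ereal_inf [set EQ f X | f in density_set lam].

Definition extreme_set (lam : R) (W : T -> R) : set (T -> R) :=
  [set f : T -> R | density_set lam f /\ EQ f W = u_lam lam W /\
           u_lam lam W \is a fin_num].

Definition u_contrib (lam : R) (X W : T -> R) : \bar R :=
  ereal_inf [set EQ f X | f in extreme_set lam W].

(* E(X | W) = 0 a.s., via the defining property of conditional expectation:
   E[X 1_{W in B}] = 0 for every Borel set B. *)
Definition cond_exp_zero (X W : T -> R) : Prop :=
  forall B : set R, measurable B ->
    (\int[P]_(x in W @^-1` B) (X x)%:E = 0)%E.

Definition continuous_distribution (W : T -> R) : Prop :=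
  forall r : R, P (W @^-1` [set r]) = 0%E.
End Defs.

(* Main.v *)
Require Import Defs.
From HB Require Import structures.
From mathcomp Require Import all_boot all_order all_algebra.
From mathcomp Require Import all_classical all_reals all_analysis.
From mathcomp Require Import measurable_realfun.
From mathcomp Require Import ring.
Import Order.TTheory GRing.Theory Num.Theory.
Local Open Scope classical_set_scope.
Local Open Scope ring_scope.
Section S.
Context d (T : measurableType d) (R : realType) (P : probability T R).
Local Open Scope ereal_scope.

Lemma mfun_of_int (W : T -> R) : P.-integrable setT (EFin \o W) ->
  measurable_fun setT W.
Proof. by move=> /measurable_int/measurable_EFinP. Qed.

Lemma int_mulf (lam : R) f Y : (0 < lam)%R -> density_set P lam f ->
  P.-integrable setT (EFin \o Y) ->
  P.-integrable setT (fun x => (Y x * f x)%:E).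
Proof.
move=> lam0 [mf f0 fl _] iY.
rewrite (_ : (fun x => _) = (EFin \o Y) \* (EFin \o f)); last first.
  by apply/funext=> x; rewrite /= EFinM.
apply: integrableMl => //.
exists lam^-1%R; split; first exact: num_real.
move=> M hM x _ /=; rewrite ger0_norm //.
exact: le_trans (fl x) (ltW hM).
Qed.

Lemma EQ_fin (lam : R) f Y : (0 < lam)%R -> density_set P lam f ->
  P.-integrable setT (EFin \o Y) -> EQ P f Y \is a fin_num.
Proof. by move=> l0 hf iY; rewrite /EQ; apply: integrable_fin_num => //; exact: (int_mulf _ _ _ l0 hf iY). Qed.


Lemma gen_contrib (lam : R) (g X W : T -> R) : (0 < lam)%R ->
  density_set P lam g ->
  P.-integrable setT (EFin \o X) -> P.-integrable setT (EFin \o W) ->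
  (forall f, density_set P lam f -> EQ P g W <= EQ P f W) ->
  (forall f, density_set P lam f -> EQ P f W = EQ P g W -> ae_eq P setT f g) ->
  u_contrib P lam X W = EQ P g X.
Proof.
move=> l0 hg iX iW hmin huniq.
have uW : u_lam P lam W = EQ P g W.
  apply/eqP; rewrite eq_le; apply/andP; split.
    by apply: ereal_inf_lbound; exists g.
  by apply: le_ereal_inf_tmp => _ [f hf <-]; exact: hmin.
rewrite /u_contrib (_ : [set EQ P f X | f in extreme_set P lam W] = [set EQ P g X]) ?ereal_inf1 //.
apply/seteqP; split => y.
- move=> [f [hf [ef fin]] <-] /=.
  have ae := huniq f hf (etrans ef uW).
  rewrite /EQ; apply: ae_eq_integral => //.
  + exact: measurable_int (int_mulf _ _ _ l0 hf iX).
  + exact: measurable_int (int_mulf _ _ _ l0 hg iX).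
  + by move: ae; apply: filterS => x h /h ->.
- move=> -> /=; exists g => //; split => //; split; first by rewrite uW.
  by rewrite uW; exact: (EQ_fin _ _ _ l0 hg iW).
Qed.


Lemma int_dens lam f : density_set P lam f -> P.-integrable setT (EFin \o f).
Proof.
move=> [mf f0 _ i1]; apply/integrableP; split; first exact/measurable_EFinP.
rewrite (eq_integral (fun x => (f x)%:E)); last first.
  by move=> x _ /=; rewrite ger0_norm.
by rewrite i1 ltry.
Qed.

Lemma dens1_ae f : density_set P 1 f -> ae_eq P setT f (cst 1%R).
Proof.
move=> hf; have [mf f0 f1 i1] := hf.
have h0 : \int[P]_x ((1 - f x)%:E) = 0.
  under eq_integral do rewrite EFinB.
  rewrite integralB_EFin //; last exact: int_dens hf.
    rewrite i1.
    have -> : \int[P]_x (1%R)%:E = 1.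
      by rewrite (integral_cst _ _ (1%:E)) //= probability_setT mule1.
    by rewrite subee.
  exact: finite_measure_integrable_cst.
have : ae_eq P setT (fun x => (1 - f x)%:E) (cst 0).
  apply/ae_eq_integral_abs => //.
    by apply/measurable_EFinP; apply: measurable_funB.
  rewrite -h0; apply: eq_integral => x _; rewrite gee0_abs // lee_fin subr_ge0.
  by have := f1 x; rewrite invr1.
apply: filterS => x h /h /= [/eqP]; rewrite subr_eq0 => /eqP <-.
by [].
Qed.


Lemma dens1 : density_set P 1 (cst 1%R).
Proof.
split => //=; first by move=> x; rewrite invr1.
by rewrite (integral_cst _ _ (1%:E)) //= probability_setT mule1.
Qed.

Lemma EQ_ae (lam : R) f g Y : (0 < lam)%R -> density_set P lam f ->
  density_set P lam g -> P.-integrable setT (EFin \o Y) ->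
  ae_eq P setT f g -> EQ P f Y = EQ P g Y.
Proof.
move=> l0 hf hg iY ae; rewrite /EQ; apply: ae_eq_integral => //.
+ exact: measurable_int (int_mulf _ _ _ l0 hf iY).
+ exact: measurable_int (int_mulf _ _ _ l0 hg iY).
+ by move: ae; apply: filterS => x h /h ->.
Qed.

Lemma contrib1 (X W : T -> R) :
  P.-integrable setT (EFin \o X) -> P.-integrable setT (EFin \o W) ->
  u_contrib P 1 X W = \int[P]_x (X x)%:E.
Proof.
move=> iX iW.
rewrite (@gen_contrib 1 (cst 1%R)) //.
- by rewrite /EQ; apply: eq_integral => x _ /=; rewrite mulr1.
- exact: dens1.
- move=> f hf; rewrite (@EQ_ae 1 f (cst 1%R)) //; first exact: dens1.
  exact: dens1_ae.
- by move=> f hf _; exact: dens1_ae.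
Qed.


Lemma intB (a b : T -> R) : P.-integrable setT (EFin \o a) ->
  P.-integrable setT (EFin \o b) ->
  P.-integrable setT (EFin \o (fun x => a x - b x)%R) /\
  \int[P]_x ((a x - b x)%R)%:E = \int[P]_x (a x)%:E - \int[P]_x (b x)%:E.
Proof.
move=> ia ib; split.
  have -> : EFin \o (fun x => a x - b x)%R = (EFin \o a) \- (EFin \o b).
    by apply/funext => x /=; rewrite EFinB.
  exact: integrableB.
under eq_integral do rewrite EFinB.
exact: integralB_EFin.
Qed.

Lemma intZ (k : R) (a : T -> R) : P.-integrable setT (EFin \o a) ->
  P.-integrable setT (EFin \o (fun x => k * a x)%R) /\
  \int[P]_x ((k * a x)%R)%:E = k%:E * \int[P]_x (a x)%:E.
Proof.
move=> ia; split.
  have -> : EFin \o (fun x => k * a x)%R = (fun x => k%:E * (EFin \o a) x).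
    by apply/funext => x /=; rewrite EFinM.
  exact: integrableZl.
under eq_integral do rewrite EFinM.
exact: integralZl.
Qed.

Lemma contrib_thr (lam q : R) (X W : T -> R) : (0 < lam)%R ->
  P.-integrable setT (EFin \o X) -> P.-integrable setT (EFin \o W) ->
  P (W @^-1` `]-oo, q[) = lam%:E -> P (W @^-1` [set q]) = 0 ->
  u_contrib P lam X W =
    lam^-1%:E * \int[P]_(x in W @^-1` `]-oo, q[) (X x)%:E.
Proof.
move=> l0 iX iW hS hq.
have mW := @mfun_of_int W iW.
set S := W @^-1` `]-oo, q[.
have hS1 : P S = lam%:E by exact: hS.
have mS : measurable S.
  by rewrite -(setTI S); apply: mW => //; exact: measurable_itv.
pose g x := (lam^-1 * \1_S x)%R.
have gE x : g x = if (W x < q)%R then lam^-1%R else 0%R.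
  rewrite /g indicE; case: ifPn => hx.
    by rewrite mem_set ?mulr1 //=.
  rewrite memNset ?mulr0 // /S /preimage /= in_itv /=; exact/negP.
have i1 : P.-integrable setT (fun x => (\1_S x)%:E).
  exact: integrable_indic.
have hg : density_set P lam g.
  split.
  - by apply: measurable_funM => //; exact: measurable_indic.
  - by move=> x; rewrite gE; case: ifP => // _; rewrite invr_ge0 ltW.
  - by move=> x; rewrite gE; case: ifP => // _; rewrite invr_ge0 ltW.
  - under eq_integral do rewrite EFinM.
    rewrite integralZl // integral_indic // setIT.
    transitivity (lam^-1%:E * lam%:E); first by congr (_ * _); exact: hS1.
    rewrite -EFinM mulVf //.
    by rewrite gt_eqF.
have key f : density_set P lam f ->
  \int[P]_x (((W x - q) * (f x - g x))%R)%:E = EQ P f W - EQ P g W.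
  move=> hf.
  transitivity (\int[P]_x (((W x * f x - W x * g x) - (q * f x - q * g x))%R)%:E).
    by apply: eq_integral => x _; congr (_%:E); ring.
  have iWf := int_mulf _ _ _ l0 hf iW.
  have iWg := int_mulf _ _ _ l0 hg iW.
  have [iA eA] := @intB (fun x => W x * f x)%R (fun x => W x * g x)%R iWf iWg.
  have [iqf eqf] := @intZ q f (@int_dens lam f hf).
  have [iqg eqg] := @intZ q g (@int_dens lam g hg).
  have [iB eB] := @intB _ _ iqf iqg.
  have [_ eAB] := @intB _ _ iA iB.
  rewrite /= in eA eB eAB.
  rewrite eAB eA eB eqf eqg.
  have [_ _ _ ->] := hf.
  have [_ _ _ ->] := hg.
  by rewrite subee // sube0.
have pos f x : density_set P lam f -> (0 <= (W x - q) * (f x - g x))%R.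
  move=> [_ f0 fl _]; rewrite gE; case: ifPn => hx.
    by apply: mulr_le0; rewrite subr_le0 ?(ltW hx) ?fl.
  by apply: mulr_ge0; rewrite ?subr0 ?f0 // subr_ge0 leNgt.
have iXS : P.-integrable setT (fun x => (X x)%:E * (\1_S x)%:E).
  have -> : (fun x => (X x)%:E * (\1_S x)%:E) = (EFin \o X) \* (EFin \o \1_S) by [].
  apply: integrableMl => //.
  exists 1%R; split; first exact: num_real.
  move=> M hM x _ /=; rewrite indicE; apply: le_trans (ltW hM).
  by case: (x \in S); rewrite ?normr1 ?normr0.
rewrite (@gen_contrib lam g X W l0 hg iX iW).
- rewrite /EQ.
  transitivity (\int[P]_x ((lam^-1)%R%:E * ((X x)%:E * (\1_S x)%:E))).
    by apply: eq_integral => x _; rewrite /g mulrCA !EFinM.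
  rewrite integralZl //; congr (_ * _).
  rewrite [RHS]integral_mkcond; apply: eq_integral => x _.
  by rewrite epatch_indic.
- move=> f hf; rewrite -subre_ge0 ?(EQ_fin _ _ _ l0 hf iW) // -key //.
  by apply: integral_ge0 => x _; rewrite lee_fin; exact: pos.
- move=> f hf e.
  have h0 : \int[P]_x (((W x - q) * (f x - g x))%R)%:E = 0.
    by rewrite key // e subee // (EQ_fin _ _ _ l0 hg iW).
  have [mf _ _ _] := hf.
  have [mg _ _ _] := hg.
  have ae1 : ae_eq P setT (fun x => (((W x - q) * (f x - g x))%R)%:E) (cst 0).
    apply/ae_eq_integral_abs => //.
      apply/measurable_EFinP; apply: measurable_funM.
        by apply: measurable_funB.
      by apply: measurable_funB.
    rewrite -h0; apply: eq_integral => x _; rewrite gee0_abs // lee_fin.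
    exact: pos.
  have aeq : \forall x \ae P, W x != q.
    exists (W @^-1` [set q]); split => //.
    - by rewrite -(setTI (W @^-1` _)); apply: mW.
    - by move=> x /= /negP; rewrite negbK => /eqP.
  apply: filterS2 ae1 aeq => x h0x Wx _.
  move: (h0x I) => [] /eqP; rewrite mulf_eq0 subr_eq0 (negbTE Wx) /= subr_eq0.
  by move=> /eqP.
Qed.


Lemma up_le (F : (set T)^nat) (c : \bar R) : (forall n, measurable (F n)) ->
  (forall n m, (n <= m)%N -> F n `<=` F m) ->
  (forall n, P (F n) <= c) -> P (\bigcup_n F n) <= c.
Proof.
move=> mF nd hc.
have nd' : nondecreasing_seq F by move=> n m nm; apply/subsetPset; exact: nd.
have cv := @nondecreasing_cvg_mu _ _ _ P F mF (bigcupT_measurable F mF) nd'.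
rewrite -(cvg_lim _ cv).
apply: lime_le; first by apply/cvg_ex; eexists; exact: cv.
exact: nearW.
exact: ereal_hausdorff.
Qed.

Lemma down_ge (F : (set T)^nat) (c : \bar R) : (forall n, measurable (F n)) ->
  (forall n m, (n <= m)%N -> F m `<=` F n) ->
  (forall n, c <= P (F n)) -> c <= P (\bigcap_n F n).
Proof.
move=> mF ni hc.
have ni' : nonincreasing_seq F by move=> n m nm; apply/subsetPset; exact: ni.
have F0 : P (F 0%N) < +oo.
  exact: le_lt_trans (probability_le1 P (mF 0%N)) (ltry _).
have cv := nonincreasing_cvg_mu F0 mF (bigcapT_measurable mF) ni'.
rewrite -(cvg_lim _ cv).
apply: lime_ge; first by apply/cvg_ex; eexists; exact: cv.
exact: nearW.
exact: ereal_hausdorff.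
Qed.

Lemma quantile (W : T -> R) (lam : R) : measurable_fun setT W ->
  continuous_distribution P W -> (0 < lam < 1)%R ->
  exists q, P (W @^-1` `]-oo, q[) = lam%:E.
Proof.
move=> mW hc /andP[l0 l1].
have mpre A : measurable A -> measurable (W @^-1` A).
  by move=> mA; rewrite -[X in measurable X]setTI; exact: mW.
pose F t := P (W @^-1` `]-oo, t[).
have mI t : measurable (W @^-1` `]-oo, t[) by apply: mpre; exact: measurable_itv.
have Fmono s t : (s <= t)%R -> F s <= F t.
  move=> st; apply: le_measure; rewrite ?inE; [exact: mI|exact: mI|].
  by move=> x /=; rewrite !in_itv /= => xs; exact: lt_le_trans xs st.
have epos n : (0 < n.+1%:R^-1 :> R)%R by rewrite invr_gt0 ltr0n.
have emono n m : (n <= m)%N -> (m.+1%:R^-1 <= n.+1%:R^-1 :> R)%R.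
  by move=> nm; rewrite lef_pV2 ?posrE ?ltr0n // ler_nat ltnS.
have [a Fa] : exists a, F a <= lam%:E.
  case: (pselect (exists a, F a <= lam%:E)) => // hna; exfalso.
  have hn n : lam%:E <= F (- n%:R)%R.
    rewrite leNgt; apply/negP => h; apply: hna; exists (- n%:R)%R; exact: ltW h.
  have ni : forall n m, (n <= m)%N ->
      W @^-1` `]-oo, (- m%:R)%R[ `<=` W @^-1` `]-oo, (- n%:R)%R[.
    move=> n m nm x /=; rewrite !in_itv /= => h; apply: lt_le_trans h _.
    by rewrite lerN2 ler_nat.
  have := @down_ge (fun n => W @^-1` `]-oo, (- n%:R)%R[) (lam%:E) (fun n => mI _) ni hn.
  rewrite (_ : \bigcap_n _ = set0) ?measure0 ?lee_fin ?leNgt ?l0 //.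
  apply/seteqP; split => x // hx; exfalso.
  have := hx (Num.truncn (- W x)).+1 I; rewrite /= in_itv /= => h2.
  move: (truncnS_gt (- W x)%R); rewrite ltrNl => h1.
  by have := lt_trans h1 h2; rewrite ltxx.
have [b Fb] : exists b, lam%:E < F b.
  case: (pselect (exists b, lam%:E < F b)) => // hnb; exfalso.
  have hn n : F n%:R <= lam%:E.
    rewrite leNgt; apply/negP => h; apply: hnb; exists n%:R; exact: h.
  have nd : forall n m, (n <= m)%N ->
      W @^-1` `]-oo, n%:R[ `<=` W @^-1` `]-oo, m%:R[.
    move=> n m nm x /=; rewrite !in_itv /= => h; apply: lt_le_trans h _.
    by rewrite ler_nat.
  have := @up_le (fun n => W @^-1` `]-oo, n%:R[) (lam%:E) (fun n => mI _) nd hn.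
  rewrite (_ : \bigcup_n _ = setT) ?probability_setT ?lee_fin ?leNgt ?l1 //.
  apply/seteqP; split => x // _.
  by exists (Num.truncn (W x)).+1 => //=; rewrite in_itv /= truncnS_gt.
set A := [set t | F t <= lam%:E].
have Aub : ubound A b.
  move=> t At; rewrite leNgt; apply/negP => bt.
  by have := le_lt_trans (le_trans (Fmono _ _ (ltW bt)) At) Fb; rewrite ltxx.
have hsA : has_sup A by split; [exists a | exists b].
set q := sup A.
have qub : ubound A q := sup_upper_bound hsA.
have e1 : W @^-1` `]-oo, q[ = \bigcup_n W @^-1` `]-oo, (q - n.+1%:R^-1)%R[.
  apply/seteqP; split => x /=.
    rewrite in_itv /= => hx; have [k hk] := ltr_add_invr hx.
    by exists k => //=; rewrite in_itv /= ltrBrDr.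
  move=> [k _]; rewrite /= !in_itv /= => h; apply: lt_le_trans h _.
  by rewrite gerBl invr_ge0 ler0n.
have Fq : F q <= lam%:E.
  rewrite /F e1; apply: up_le => //.
    move=> n m nm x /=; rewrite !in_itv /= => h; apply: lt_le_trans h _.
    by rewrite lerD2l lerN2 emono.
  move=> n.
  have [e Ae he] := sup_adherent (epos n) hsA.
  exact: le_trans (Fmono _ _ (ltW he)) Ae.
have e2 : W @^-1` `]-oo, q] = \bigcap_n W @^-1` `]-oo, (q + n.+1%:R^-1)%R[.
  apply/seteqP; split => x /=.
    rewrite in_itv /= => hx k _; rewrite /= in_itv /=.
    by apply: le_lt_trans hx _; rewrite ltrDl.
  move=> hx; rewrite in_itv /= leNgt; apply/negP => qx.
  have [k hk] := ltr_add_invr qx.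
  have := hx k I; rewrite /= in_itv /= => h.
  by have := lt_trans h hk; rewrite ltxx.
have Gq : lam%:E <= P (W @^-1` `]-oo, q]).
  rewrite e2; apply: down_ge => //.
    move=> n m nm x /=; rewrite !in_itv /= => h; apply: lt_le_trans h _.
    by rewrite lerD2l emono.
  move=> n; rewrite leNgt; apply/negP => h.
  have := qub _ (ltW h); rewrite gerDl leNgt.
  by rewrite epos.
have eU : W @^-1` `]-oo, q] = W @^-1` `]-oo, q[ `|` W @^-1` [set q].
  apply/seteqP; split => x /=; rewrite !in_itv /=.
    rewrite le_eqVlt => /orP[/eqP h|h]; [by right|by left].
  by move=> [h|->]; [exact: ltW|].
have mq : measurable (W @^-1` [set q]) by apply: mpre.
have dj : W @^-1` `]-oo, q[ `&` W @^-1` [set q] = set0.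
  apply/seteqP; split => x //=; rewrite in_itv /= => -[h e].
  by rewrite e ltxx in h.
have hU : P (W @^-1` `]-oo, q]) = F q.
  rewrite eU measureU //.
  transitivity (F q + 0); last by rewrite adde0.
  by congr (_ + _); exact: hc.
exists q; apply/le_anti; rewrite Fq /=.
by apply: (le_trans Gq); rewrite hU /F.
Qed.

End S.

Definition pmeas d (T : measurableType d) (R : realType) (P : probability T R)
  (h : T -> \bar R) (W : T -> R)
  (mh : measurable_fun setT h) (h0 : forall x, (0 <= h x)%E)
  (mW : measurable_fun setT W) : set R -> \bar R :=
  fun B => (\int[P]_(x in W @^-1` B) h x)%E.
Arguments pmeas {d T R} P {h W} mh h0 mW.

Section pmeas.
Context d (T : measurableType d) (R : realType) (P : probability T R).
Variables (h : T -> \bar R) (W : T -> R).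
Hypotheses (mh : measurable_fun setT h) (h0 : forall x, (0 <= h x)%E)
  (mW : measurable_fun setT W).
Local Open Scope ereal_scope.

Let pm0 : pmeas P mh h0 mW set0 = 0.
Proof. by rewrite /pmeas preimage_set0 integral_set0. Qed.

Let pm_ge0 B : 0 <= pmeas P mh h0 mW B.
Proof. by apply: integral_ge0 => x _; exact: h0. Qed.

Let pm_sa : semi_sigma_additive (pmeas P mh h0 mW).
Proof.
move=> F mF tF mUF; rewrite /pmeas preimage_bigcup.
apply: (semi_sigma_additive_nng_induced mh h0).
- by move=> n; rewrite -[X in measurable X]setTI; exact: mW.
- apply/trivIsetP => /= i j _ _ ij; rewrite -preimage_setI.
  by move/trivIsetP : tF => /(_ _ _ _ _ ij) ->//; rewrite preimage_set0.
- by rewrite -preimage_bigcup -[X in measurable X]setTI; exact: mW.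
Qed.

HB.instance Definition _ := isMeasure.Build _ _ _
  (pmeas P mh h0 mW) pm0 pm_ge0 pm_sa.

End pmeas.

Section S2.
Context d (T : measurableType d) (R : realType) (P : probability T R).
Local Open Scope ereal_scope.

Lemma extend (X W : T -> R) : P.-integrable setT (EFin \o X) ->
  measurable_fun setT W ->
  (forall t, \int[P]_(x in W @^-1` `]-oo, t[) (X x)%:E = 0) ->
  cond_exp_zero P X W.
Proof.
move=> iX mW h0 B mB.
have mX := measurable_int _ iX.
have mp := measurable_funepos mX.
have mn := measurable_funeneg mX.
have p0 : forall x, 0 <= (EFin \o X)^\+ x by move=> x; exact: funepos_ge0.
have n0 : forall x, 0 <= (EFin \o X)^\- x by move=> x; exact: funeneg_ge0.
have mpre A : measurable A -> measurable (W @^-1` A).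
  by move=> mA; rewrite -[X in measurable X]setTI; exact: mW.
have finp A : measurable A ->
    \int[P]_(x in W @^-1` A) (EFin \o X)^\+ x \is a fin_num.
  move=> mA; apply: integrable_fin_num; first exact: mpre.
  apply: integrable_funepos; first exact: mpre.
  exact: integrableS (mpre _ mA) _ iX.
have finn A : measurable A ->
    \int[P]_(x in W @^-1` A) (EFin \o X)^\- x \is a fin_num.
  move=> mA; apply: integrable_fin_num; first exact: mpre.
  apply: integrable_funeneg; first exact: mpre.
  exact: integrableS (mpre _ mA) _ iX.
have eqm : forall A, measurable A ->
    pmeas P mp p0 mW A = pmeas P mn n0 mW A.
  apply: (measure_unique (@RGenInftyO.G R) (fun k : nat => `]-oo, k%:R[%classic)).
  - exact: RGenInftyO.measurableE.
  - move=> A1 A2 [a ->] [b ->]; exists (Num.min a b).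
    apply/seteqP; split => x /=; rewrite !in_itv /= lt_min.
      by move=> [-> ->].
    by move=> /andP[].
  - by move=> k; exists k%:R.
  - apply/seteqP; split => x // _; exists (Num.truncn x).+1 => //=.
    by rewrite in_itv /= truncnS_gt.
  - move=> A [t ->].
    have e : \int[P]_(x in W @^-1` `]-oo, t[) (EFin \o X)^\+ x -
             \int[P]_(x in W @^-1` `]-oo, t[) (EFin \o X)^\- x = 0.
      by rewrite -integralE; exact: h0 t.
    have fn := finn _ (@measurable_itv _ `]-oo, t[).
    transitivity (\int[P]_(x in W @^-1` `]-oo, t[) (EFin \o X)^\+ x -
             \int[P]_(x in W @^-1` `]-oo, t[) (EFin \o X)^\- x +
             \int[P]_(x in W @^-1` `]-oo, t[) (EFin \o X)^\- x).
      by rewrite subeK.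
    by rewrite e add0e.
  - move=> k.
    by have /fin_numPlt/andP[_ ->] := finp _ (@measurable_itv _ `]-oo, k%:R[).
have e : \int[P]_(x in W @^-1` B) (EFin \o X)^\+ x =
         \int[P]_(x in W @^-1` B) (EFin \o X)^\- x := eqm B mB.
by rewrite integralE e subee // finn.
Qed.

End S2.


Theorem proposition5p9 (d : measure_display) (T : measurableType d)
  (R : realType) (P : probability T R) (X W : T -> R) :
  P.-integrable setT (EFin \o X) ->
  P.-integrable setT (EFin \o W) ->
  continuous_distribution P W ->
  (forall lam : R, 0 < lam <= 1 -> u_contrib P lam X W = 0%E) <->
  cond_exp_zero P X W.
Proof.
move=> iX iW hc.
have mW := @mfun_of_int _ _ _ P W iW.
split.
- move=> h; apply: extend => // t.
  set S := W @^-1` `]-oo, t[.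
  have mS : measurable S.
    by rewrite -(setTI S); apply: mW => //; exact: measurable_itv.
  have Sfin : P S \is a fin_num by apply: fin_num_measure.
  set lam := fine (P S).
  have hS : P S = lam%:E by rewrite fineK.
  have lam0 : (0 <= lam)%R by rewrite fine_ge0.
  have lam1 : (lam <= 1)%R.
    by rewrite -lee_fin -hS; apply: probability_le1.
  have [l0|l0] := eqVneq lam 0%R.
    apply: null_set_integral => //.
      exact: measurable_funS measurableT _ (measurable_int _ iX).
    by transitivity (lam%:E); [exact: hS|rewrite l0].
  have lpos : (0 < lam)%R by rewrite lt_neqAle eq_sym l0.
  have := h lam; rewrite lpos lam1 => /(_ isT).
  rewrite (@contrib_thr _ _ _ P lam t X W lpos iX iW hS (hc t)).
  move/eqP; rewrite mule_eq0 eqe invr_eq0 (negbTE l0) /=.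
  by move/eqP.
- move=> hcz lam /andP[l0 l1].
  have [->|lne1] := eqVneq lam 1%R.
    rewrite (@contrib1 _ _ _ P X W) //.
    by have := hcz setT measurableT; rewrite preimage_setT.
  have l01 : (0 < lam < 1)%R by rewrite l0 lt_neqAle lne1 l1.
  have [q hq] := @quantile _ _ _ P W lam mW hc l01.
  rewrite (@contrib_thr _ _ _ P lam q X W l0 iX iW hq (hc q)) hcz ?mule0 //.
Qed.
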